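(* Let $\Gamma$ be an elliptic graph with NN-elliptic sequence $\{B_j\}_{j=-1}^m$ (with the convention $B_{m+1}=\emptyset$). Assume $\Gamma_{new}$ is obtained from $\Gamma$ by attaching new vertices $v_1,\dots,v_s$ ($s\ge1$), each joined by a single edge to a fixed vertex $v_0\in\mathcal V(\Gamma)$ and to no other vertex, and that $\Gamma_{new}$ is an elliptic graph. Then (a) $v_0\in\mathcal V(B_{-1})\setminus\mathcal V(B_1)$; (b) the $E_{v_0}$-coefficient of $Z_{min}^\Gamma$ is $1$; (c) $(Z^\Gamma_{min},E_{v_0})_\Gamma\le1-s$. Furthermore, if $v_0\in\mathcal V(B_0)\setminus\mathcal V(B_1)$ then $v_0$ is an end-vertex (valency-one vertex) of $B_0$.
   Context: For a decorated tree $G$ (vertex set $\mathcal V(G)$, integer decorations $e_v$, genera zero, negative definite form $(\,,\,)_G$ on $L(G)=\mathbb Z\langle E_v\rangle$ with $(E_v,E_v)=e_v$, $(E_v,E_w)=1$ for adjacent $v\ne w$, $0$ otherwise) let $L'(G)$ be the dual lattice, $[l']$ the class in $L'(G)/L(G)$, $Z_K^G$ with $(Z_K^G,E_v)=e_v+2$, $\chi(l')=-(l',l'-Z_K^G)/2$; $\ge$ coordinatewise, $l>0$ if $l\ge0,l\ne0$, $|l'|$ the support. $\mathcal S'(G)=\{l':(l',E_v)\le0\ \forall v\}$, $s_h=\min\{l'\in\mathcal S'(G):[l']=h\}$; $Z^G_{min}$ is the minimal nonzero element of $\mathcal S'(G)\cap L(G)$, similarly $Z_{min}(B)$ for a connected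 full subgraph $B$. Elliptic graph: $e_v\le-2$ for all $v$ and $\min_{l\in L(G),l>0}\chi(l)=0$. NN-elliptic sequence: $B_{-1}=G$, $Z_{B_{-1}}=s_{[Z^G_K]}$, $B_0=|Z^G_K-s_{[Z^G_K]}|$; for $j\ge0$, $Z_{B_j}=Z_{min}(B_j)$, and if $Z^G_K-\sum_{i=-1}^jZ_{B_i}\ne0$ then $B_{j+1}=|Z^G_K-\sum_{i=-1}^jZ_{B_i}|$; $m$ is the index with $Z^G_K=\sum_{i=-1}^mZ_{B_i}$. *)

(* Defs.v *)
From HB Require Import structures.
From mathcomp Require Import all_boot all_order all_algebra.
Set Implicit Arguments. Unset Strict Implicit. Unset Printing Implicit Defensive.
Import Order.TTheory GRing.Theory Num.Theory.
Local Open Scope ring_scope.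

Section Plumbing.
Variable T : finType.
Variable adj : rel T.
Variable e : T -> int.         (* decorations e_v; all genera are zero *)

(* Elements of L(G) (x) Q are functions T -> rat: l = sum_v l(v) E_v. *)

Definition imat (u v : T) : rat :=
  if u == v then (e u)%:~R else if adj u v then 1 else 0.

Definition form (x y : T -> rat) : rat :=
  \sum_(u : T) \sum_(v : T) x u * y v * imat u v.

Definition pairE (x : T -> rat) (v : T) : rat := \sum_(u : T) x u * imat u v.

Definition decorated_tree : Prop :=
  [/\ symmetric adj, irreflexive adj, (0 < #|T|)%N,
      (forall u v, connect adj u v) &
      #|[set p : T * T | adj p.1 p.2]| = (2 * (#|T| - 1))%N] /\
      (forall x : T -> rat, (exists v, x v != 0) -> form x x < 0).

Definition inL (x : T -> rat) : Prop := forall v, x v \is a Num.int.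
Definition inL' (x : T -> rat) : Prop := forall v, pairE x v \is a Num.int.
Definition same_class (x y : T -> rat) : Prop := inL (fun v => x v - y v).

Definition vle (x y : T -> rat) : Prop := forall v, x v <= y v.
Definition vpos (x : T -> rat) : Prop := vle (fun _ => 0) x /\ exists v, x v != 0.
Definition support (x : T -> rat) : {set T} := [set v | x v != 0].

Definition is_ZK (z : T -> rat) : Prop := forall v, pairE z v = (e v)%:~R + 2.

Definition chi (ZK x : T -> rat) : rat := - form x (fun v => x v - ZK v) / 2.

Definition inS' (x : T -> rat) : Prop := inL' x /\ forall v, pairE x v <= 0.

Definition is_s_class (y x : T -> rat) : Prop :=
  [/\ inS' x, same_class x y &
      forall x', inS' x' -> same_class x' y -> vle x x'].

(* x = Z_min(B) for a (connected full) subgraph with vertex set B: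
   the minimal nonzero element of S'(B) /\ L(B), elements of L(B) being the
   elements of L(G) supported on B.  For B = setT this is Z_min^G. *)
Definition is_Zmin (B : {set T}) (x : T -> rat) : Prop :=
  let P := fun y : T -> rat =>
    [/\ inL y, support y \subset B, exists v, y v != 0 &
        forall v, v \in B -> pairE y v <= 0] in
  P x /\ forall y, P y -> vle x y.

Definition elliptic : Prop :=
  (forall v, e v <= -2) /\
  exists ZK, [/\ is_ZK ZK,
    (forall l, inL l -> vpos l -> 0 <= chi ZK l) &
    (exists l, [/\ inL l, vpos l & chi ZK l = 0])].

(* NN-elliptic sequence, shifted by one: B k = B_{k-1}, Z k = Z_{B_{k-1}}
   for k = 0 .. m+1, and B (m+2) = B_{m+1} = emptyset (convention). *)
Definition NN_elliptic_seq (m : nat) (B : nat -> {set T}) (Z : nat -> T -> rat)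
  : Prop :=
  exists ZK, [/\ is_ZK ZK, B 0%N = setT & is_s_class ZK (Z 0%N)] /\ [/\
    (forall k, (1 <= k <= m.+2)%N ->
        B k = support (fun v => ZK v - \sum_(i < k) Z i v)),
    (forall k, (1 <= k <= m.+1)%N -> is_Zmin (B k) (Z k)),
    (forall k, (k <= m)%N -> exists v, ZK v - \sum_(i < k.+1) Z i v != 0) &
    (forall v, ZK v = \sum_(i < m.+2) Z i v)].

End Plumbing.

(* Gamma_new: attach s new vertices (inr i), each joined only to v0. *)
Definition new_adj (T : finType) (adj : rel T) (s : nat) (v0 : T)
  : rel (T + 'I_s)%type :=
  fun a b => match a, b with
    | inl u, inl v => adj u v
    | inl u, inr _ => u == v0
    | inr _, inl v => v == v0
    | inr _, inr _ => false
    end.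

Definition new_dec (T : finType) (e : T -> int) (s : nat) (f : 'I_s -> int)
  : (T + 'I_s)%type -> int :=
  fun a => match a with inl u => e u | inr i => f i end.

(* Main.v *)
From Pilot Require Import Defs.
From HB Require Import structures.
From mathcomp Require Import all_boot all_order all_algebra.
Import Order.TTheory GRing.Theory Num.Theory.
Local Open Scope ring_scope.
From mathcomp Require Import ring lra zify.
Set Implicit Arguments. Unset Strict Implicit. Unset Printing Implicit Defensive.

Local Close Scope ring_scope.

Section Tree.
Variable T : finType.

Definition edges (r : rel T) : {set T * T} := [set p : T * T | r p.1 p.2].

Lemma card_disjU (A B : {set T * T}) : A :&: B = set0 -> #|A :|: B| = #|A| + #|B|.
Proof. by move=> h; rewrite cardsU h cards0 subn0. Qed.

Lemma conn_edges (r : rel T) : symmetric r -> (forall u v, connect r u v) ->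
  2 * (#|T| - 1) <= #|edges r|.
Proof.
move=> rs rc.
case: (posnP #|T|) => [->|T0]; first by [].
have key : forall k, k < #|T| -> exists A : {set T},
    #|A| = k.+1 /\ 2 * k <= #|[set p : T * T | [&& r p.1 p.2, p.1 \in A & p.2 \in A]]|.
  elim=> [|k IH] hk.
    have [x0 _] := card_gt0P T0 .
    by exists [set x0]; rewrite cards1.
  have [A [cA eA]] := IH (ltnW hk).
  have [b bA] : exists b, b \notin A.
    apply/existsP; apply: contraT => /existsPn h.
    have : A = setT by apply/setP => x; rewrite in_setT; move: (h x); rewrite negbK => ->.
    by move=> EA; move: hk; rewrite -cA EA cardsT ltnn.
  have [a aA] : exists a, a \in A by apply/card_gt0P; rewrite cA.
  have : [exists x, [exists y, [&& x \in A, y \notin A & r x y]]].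
    apply: contraT => /existsPn h2.
    have cl : closed r (mem A).
      move=> x y rxy; apply/idP/idP => hx.
        move: (h2 x) => /existsPn /(_ y); rewrite hx rxy /= andbT; by rewrite negbK.
      move: (h2 y) => /existsPn /(_ x); rewrite hx (rs y x) rxy /= andbT; by rewrite negbK.
    move: (closed_connect cl (rc a b)). rewrite aA (negbTE bA). done.
  case/existsP => x /existsP [y /and3P [xA yA rxy]].
  exists (y |: A); split; first by rewrite cardsU1 yA cA.
  set EA := [set p : T * T | [&& r p.1 p.2, p.1 \in A & p.2 \in A]] in eA *.
  have sub : EA :|: [set (x, y); (y, x)] \subset
     [set p : T * T | [&& r p.1 p.2, p.1 \in y |: A & p.2 \in y |: A]].
    apply/subsetP => p; rewrite !inE => /orP [/and3P [-> -> ->]|/orP [/eqP -> | /eqP ->]] /=.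
    - by rewrite !orbT.
    - by rewrite rxy xA eqxx !orbT.
    - by rewrite (rs y x) rxy xA eqxx !orbT.
  apply: leq_trans (subset_leq_card sub); rewrite card_disjU.
    rewrite cards2; have -> : (x, y) != (y, x).
      by apply/eqP => -[E _]; move: xA yA; rewrite E => ->.
    by rewrite (_ : true.+1 = 2) // mulnSr; apply: leq_add.
  apply/setP => -[p1 p2]; rewrite !inE /=; apply/negP => /andP [/and3P [_ h1 h2]].
  by case/orP => /eqP [E1 E2]; subst; [move: yA; rewrite h2 | move: yA; rewrite h1].
have hk : #|T| - 1 < #|T| by rewrite subn1 prednK // ltnSn.
have [A [_ eA]] := key (#|T| - 1) hk.
apply: leq_trans eA _; apply: subset_leq_card; apply/subsetP => p.
by rewrite !inE => /andP [].
Qed.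

Variable adj : rel T.
Hypothesis adj_sym : symmetric adj.
Hypothesis adj_irr : irreflexive adj.
Hypothesis conn : forall u v, connect adj u v.
Hypothesis hE : #|edges adj| = 2 * (#|T| - 1).

Lemma tree_split (v0 u1 u2 : T) : adj v0 u1 -> adj v0 u2 -> u1 != u2 ->
  exists D : {set T}, [/\ u1 \in D, u2 \notin D, v0 \notin D &
     forall a b, a \in D -> adj a b -> b != v0 -> b \in D].
Proof.
move=> a1 a2 u12.
have n1 : u1 != v0 by apply/eqP => E; move: a1; rewrite E adj_irr.
have n2 : u2 != v0 by apply/eqP => E; move: a2; rewrite E adj_irr.
pose adj' := [rel a b | [&& adj a b, a != v0 & b != v0]].
have s' : symmetric adj' by move=> a b /=; rewrite adj_sym [(a != v0) && _]andbC.
pose D := [set x | connect adj' u1 x].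
have v0D : v0 \notin D.
  have cl : closed adj' [pred x | x != v0].
    by move=> x y /and3P [_ hx hy]; rewrite !inE hx hy.
  apply/negP; rewrite inE => c; have := closed_connect cl c; by rewrite !inE n1 eqxx.
exists D; split => //.
- by rewrite inE connect0.
- apply/negP; rewrite inE => c12.
  pose adjR := [rel a b | adj a b && ~~ (((a == v0) && (b == u1)) || ((a == u1) && (b == v0)))].
  have sR : symmetric adjR.
    move=> a b; rewrite /= adj_sym; congr (_ && ~~ _).
    by rewrite orbC (andbC (b == u1)) (andbC (b == v0)).
  have sub' : forall a b, connect adj' a b -> connect adjR a b.
    move=> a b; apply: connect_sub => c d /and3P [h hc hd]; apply: connect1.
    by rewrite /= h (negbTE hc) (negbTE hd) andbF.
  have c01 : connect adjR v0 u1.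
    apply: (@connect_trans _ _ u2).
      by apply: connect1; rewrite /= a2 eqxx /= (eq_sym u2) (negbTE u12) eq_sym (negbTE n1).
    by apply: sub'; rewrite (sym_connect_sym s').
  have cR : forall u v, connect adjR u v.
    move=> u v; apply: (connect_sub _ (conn u v)) => c d hcd.
    case: (boolP (((c == v0) && (d == u1)) || ((c == u1) && (d == v0)))).
      case/orP => /andP [/eqP -> /eqP ->] //.
      by rewrite (sym_connect_sym sR).
    by move=> h; apply: connect1; rewrite /= hcd h.
  have := conn_edges sR cR.
  have sub : edges adjR :|: [set (v0, u1); (u1, v0)] \subset edges adj.
    apply/subsetP => p; rewrite !inE => /orP [/andP [] //|/orP [/eqP -> | /eqP ->]] /=.
      by [].
    by rewrite adj_sym.
  have := subset_leq_card sub; rewrite card_disjU.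
    rewrite cards2 hE; have -> : (v0, u1) != (u1, v0).
      by apply/eqP => -[E _]; move: n1; rewrite E eqxx.
    lia.
  apply/setP => p; rewrite !inE; apply/negbTE; apply/andP => -[/andP [_ h]].
  by case/orP => /eqP E; move: h; rewrite E /= !eqxx ?orbT.
- move=> a b; rewrite !inE => ca ab bv.
  apply: (connect_trans ca); apply: connect1; rewrite /= ab bv andbT.
  by apply: contraNneq v0D => <-; rewrite inE.
Qed.

End Tree.

Local Open Scope ring_scope.

Section Basics.
Variables (T : finType) (adj : rel T) (e : T -> int).
Hypothesis adj_sym : symmetric adj.
Hypothesis adj_irr : irreflexive adj.

Local Notation im := (imat adj e).
Local Notation dform := (Pilot.Defs.form adj e).
Local Notation pE := (pairE adj e).

Lemma imatC u v : im u v = im v u.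
Proof. by rewrite /imat eq_sym adj_sym; case: (eqVneq v u) => [->|]. Qed.

Lemma formE x y : dform x y = \sum_u x u * pE y u.
Proof.
rewrite /Defs.form; apply: eq_bigr => u _; rewrite /pairE big_distrr.
by apply: eq_bigr => v _ /=; rewrite imatC mulrA.
Qed.

Lemma formC x y : dform x y = dform y x.
Proof.
rewrite /Defs.form exchange_big; apply: eq_bigr => u _; apply: eq_bigr => v _.
by rewrite imatC; ring.
Qed.

Lemma pED y z u : pE (fun v => y v + z v) u = pE y u + pE z u.
Proof. by rewrite /pairE -big_split; apply: eq_bigr => v _; rewrite mulrDl. Qed.
Lemma pEB y z u : pE (fun v => y v - z v) u = pE y u - pE z u.
Proof. by rewrite /pairE -sumrB; apply: eq_bigr => v _; rewrite mulrBl. Qed.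
Lemma pEZ c y u : pE (fun v => c * y v) u = c * pE y u.
Proof. by rewrite /pairE big_distrr; apply: eq_bigr => v _ /=; rewrite mulrA. Qed.

Lemma formDr x y z : dform x (fun v => y v + z v) = dform x y + dform x z.
Proof. by rewrite !formE -big_split; apply: eq_bigr => u _; rewrite pED mulrDr. Qed.
Lemma formBr x y z : dform x (fun v => y v - z v) = dform x y - dform x z.
Proof. by rewrite !formE -sumrB; apply: eq_bigr => u _; rewrite pEB mulrBr. Qed.
Lemma formDl x y z : dform (fun v => y v + z v) x = dform y x + dform z x.
Proof. by rewrite formC formDr !(formC x). Qed.
Lemma formBl x y z : dform (fun v => y v - z v) x = dform y x - dform z x.
Proof. by rewrite formC formBr !(formC x). Qed.

Definition chiF (x : T -> rat) : rat :=
  (\sum_u x u * ((e u)%:~R + 2) - dform x x) / 2.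

Lemma chiE ZK x : is_ZK adj e ZK -> chi adj e ZK x = chiF x.
Proof.
move=> hZ; rewrite /chi /chiF formBr (formE x ZK).
under eq_bigr => u _ do rewrite hZ.
by rewrite mulNr -mulNr opprB.
Qed.

Lemma chiFD x y : chiF (fun v => x v + y v) = chiF x + chiF y - dform x y.
Proof.
rewrite /chiF formDl !formDr (formC y x).
have -> : \sum_u (x u + y u) * ((e u)%:~R + 2) =
  \sum_u x u * ((e u)%:~R + 2) + \sum_u y u * ((e u)%:~R + 2).
  by rewrite -big_split; apply: eq_bigr => u _; rewrite mulrDl.
by field.
Qed.

Definition Ev (w : T) : T -> rat := fun u => (u == w)%:R.

Lemma sum_delta (w : T) (f : T -> rat) : \sum_u (u == w)%:R * f u = f w.
Proof.
rewrite (bigD1 w) //= eqxx mul1r big1 ?addr0 // => u /negbTE ->.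
by rewrite mul0r.
Qed.

Lemma pE_Ev w u : pE (Ev w) u = im w u.
Proof. exact: sum_delta. Qed.

Lemma form_Evl w x : dform (Ev w) x = pE x w.
Proof. by rewrite formE sum_delta. Qed.

Lemma chiF_Ev w : chiF (Ev w) = 1.
Proof.
rewrite /chiF form_Evl pE_Ev sum_delta /imat eqxx.
by field.
Qed.


Lemma int_ge1 (x : rat) : x \is a Num.int -> 0 < x -> 1 <= x.
Proof.
move=> xi xp; have := norm_intr_ge1 xi (lt0r_neq0 xp).
by rewrite ger0_norm // ltW.
Qed.

Lemma imat_int u v : im u v \is a Num.int.
Proof. by rewrite /imat; case: eqP => _; [exact: intr_int | case: adj]. Qed.

Lemma pE_int y v : inL y -> pE y v \is a Num.int.
Proof.
move=> yi; rewrite /pairE; apply: rpred_sum => u _.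
by apply: rpredM; [exact: yi | exact: imat_int].
Qed.

Lemma imat_ge0 u v : u != v -> 0 <= im u v.
Proof. by rewrite /imat => /negbTE ->; case: adj. Qed.

Lemma form_ext x y y' : (forall v, y v = y' v) -> dform x y = dform x y'.
Proof.
move=> h; apply: eq_bigr => u _; apply: eq_bigr => v _; by rewrite h.
Qed.
Lemma form_extl x x' y : (forall v, x v = x' v) -> dform x y = dform x' y.
Proof.
move=> h; apply: eq_bigr => u _; apply: eq_bigr => v _; by rewrite h.
Qed.
Lemma pE_ext y y' v : (forall u, y u = y' u) -> pE y v = pE y' v.
Proof. move=> h; apply: eq_bigr => u _; by rewrite h. Qed.
Lemma chiF_ext x x' : (forall v, x v = x' v) -> chiF x = chiF x'.
Proof.
move=> h; rewrite /chiF (form_extl _ h) (form_ext _ h).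
by congr ((_ - _) / _); apply: eq_bigr => u _; rewrite h.
Qed.

Hypothesis negdef : forall x : T -> rat, (exists v, x v != 0) -> dform x x < 0.

Lemma S_nonneg (B : {set T}) y : Defs.support y \subset B ->
  (forall v, v \in B -> pE y v <= 0) -> forall v, 0 <= y v.
Proof.
move=> sB hB.
case: (boolP [exists v, y v < 0]) => [/existsP [w hw]|/existsPn h]; last first.
  by move=> v; rewrite leNgt h.
exfalso.
pose n := fun v => if y v < 0 then - y v else 0.
pose p := fun v => if y v < 0 then 0 else y v.
have ypn : forall v, y v = p v - n v.
  by move=> v; rewrite /p /n; case: ifP => _; rewrite ?opprK ?subr0 ?add0r.
have hnn : dform n n < 0.
  by apply: negdef; exists w; rewrite /n hw oppr_eq0 lt_eqF.
have h1 : dform n y <= 0.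
  rewrite formE; apply: sumr_le0 => u _; rewrite /n.
  case: ifP => hu; last by rewrite mul0r.
  have hp : pE y u <= 0.
    apply: hB; apply: (subsetP sB); by rewrite inE lt_eqF.
  nra.
have h2 : 0 <= dform n p.
  apply: sumr_ge0 => u _; apply: sumr_ge0 => v _.
  case: (eqVneq u v) => [<-|uv].
    by rewrite /n /p; case: ifP => _; rewrite ?mulr0 ?mul0r.
  apply: mulr_ge0; last exact: imat_ge0.
  apply: mulr_ge0; rewrite /n /p; case: ifP => // hu; try by rewrite oppr_ge0 ltW.
  by rewrite leNgt hu.
have : dform n y = dform n p - dform n n.
  by rewrite -formBr; apply: form_ext.
lra.
Qed.

Lemma zero_nbr y v u : (forall w, 0 <= y w) -> y v = 0 -> pE y v <= 0 ->
  adj u v -> y u = 0.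
Proof.
move=> yp yv hv huv.
have hs : \sum_w y w * im w v = 0.
  apply/eqP; rewrite eq_le hv /=; apply: sumr_ge0 => w _.
  case: (eqVneq w v) => [->|wv]; first by rewrite yv mul0r.
  by apply: mulr_ge0; [exact: yp | exact: imat_ge0 wv].
have hge : forall w, xpredT w -> 0 <= y w * im w v.
  move=> w _; case: (eqVneq w v) => [->|wv]; first by rewrite yv mul0r.
  by apply: mulr_ge0; [exact: yp | exact: imat_ge0 wv].
have := @psumr_eq0P _ _ xpredT (fun w => y w * im w v) hge hs u isT.
have uv : u != v by apply/eqP => E; move: huv; rewrite E adj_irr.
by rewrite /imat (negbTE uv) huv mulr1.
Qed.


Hypothesis conn : forall u v, connect adj u v.

Lemma Zmin_full Z : is_Zmin adj e setT Z -> forall v, 1 <= Z v.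
Proof.
case=> [[Zi _ [w hw] hS] _].
have Zp := S_nonneg (subsetT _) hS.
have cl : closed adj [pred v | Z v == 0].
  move=> x y hxy /=; apply/eqP/eqP => h.
    by apply: (zero_nbr Zp h (hS x (in_setT x))); rewrite adj_sym.
  exact: (zero_nbr Zp h (hS y (in_setT y))).
move=> v; have := closed_connect cl (conn v w); rewrite !inE (negbTE hw) => h.
apply: int_ge1; first exact: Zi.
by rewrite lt_def h Zp.
Qed.

Lemma Zmin_sub_full B Y Z : is_Zmin adj e setT Z -> is_Zmin adj e B Y ->
  forall v, v \in B -> 1 <= Y v.
Proof.
move=> hZ hY; have Zf := Zmin_full hZ.
case: hZ => [[Zi _ _ hZS] _].
have Zp := S_nonneg (subsetT _) hZS.
case: hY => [[Yi sY [w hw] hYS] Ymin].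
have Yp := S_nonneg sY hYS.
move=> v vB; case: (eqVneq (Y v) 0) => [Yv0|Yv]; last first.
  by apply: int_ge1; [exact: Yi | rewrite lt_def Yv Yp].
exfalso.
pose N := [set u in B | Y u == 0].
pose x := fun u => if u \in N then Z u else 0.
have xi : inL x by move=> u; rewrite /x; case: ifP => _; [exact: Zi | exact: rpred0].
have sx : Defs.support x \subset B.
  apply/subsetP => u; rewrite inE /x; case: ifP; last by rewrite eqxx.
  by rewrite inE => /andP [].
have nx : exists v, x v != 0.
  exists v; rewrite /x inE vB Yv0 eqxx /=.
  by apply: lt0r_neq0; apply: lt_le_trans (Zf v).
have px : forall u, u \in B -> pE x u <= 0.
  move=> u uB; case: (boolP (u \in N)) => uN.
    apply: le_trans (hZS u (in_setT u)); apply: ler_sum => t _.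
    rewrite /x; case: ifP => tN //; rewrite mul0r.
    apply: mulr_ge0 => //; apply: imat_ge0.
    by apply/eqP => E; move: tN; rewrite E uN.
  apply: sumr_le0 => t _; rewrite /x; case: ifP => tN; last by rewrite mul0r.
  have tu : t != u by apply/eqP => E; move: tN; rewrite E (negbTE uN).
  rewrite /imat (negbTE tu); case: ifP => htu; last by rewrite mulr0.
  move: tN uN; rewrite !inE => /andP [tB /eqP Yt] /nandP [/negP //|/negP []].
  apply/eqP; apply: (zero_nbr Yp Yt (hYS t tB)).
  by rewrite adj_sym.
have := Ymin x (And4 xi sx nx px) w.
rewrite /x; case: ifP => wN.
  by move: wN hw; rewrite inE => /andP [_ ->].
move=> Yw0; move: hw; suff -> : Y w = 0 by rewrite eqxx.
by apply/eqP; rewrite eq_le Yw0 Yp.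
Qed.


Lemma chiF0 : chiF (fun _ => 0) = 0.
Proof.
rewrite /chiF /Defs.form big1 ?sub0r; last by move=> u _; rewrite mul0r.
rewrite big1 ?oppr0 ?mul0r // => u _; rewrite big1 // => v _; by rewrite !mul0r.
Qed.

Lemma form_Evr x w : dform x (Ev w) = pE x w.
Proof. by rewrite formC form_Evl. Qed.

Lemma chiF_addEv x w : chiF (fun u => x u + Ev w u) = chiF x + 1 - pE x w.
Proof. by rewrite chiFD chiF_Ev form_Evr. Qed.

Lemma sum_Ev w : \sum_u Ev w u = 1.
Proof.
rewrite (bigD1 w) //= /Ev eqxx big1 ?addr0 // => u /negbTE ->; by [].
Qed.

Lemma chi_split Z x : vle Z x ->
  chiF x = chiF Z + chiF (fun v => x v - Z v) - dform Z (fun v => x v - Z v).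
Proof.
move=> _; rewrite -chiFD; apply: chiF_ext => v; by rewrite addrC subrK.
Qed.

Lemma up_step x y v : (forall v, pE y v <= 0) -> vle x y -> 0 < pE x v -> x v < y v.
Proof.
move=> hy xy hv; rewrite lt_neqAle xy andbT; apply/eqP => E.
have : pE x v <= pE y v.
  apply: ler_sum => u _; case: (eqVneq u v) => [->|uv]; first by rewrite E.
  by apply: ler_wpM2r; [exact: imat_ge0 uv | exact: xy].
by move=> H; move: (le_trans H (hy v)); rewrite leNgt hv.
Qed.

Lemma laufer_up (y : T -> rat) (hy : forall v, pE y v <= 0) (k : nat) :
  forall x, inL x -> inL y -> vle x y -> \sum_v (y v - x v) <= k%:R ->
  exists x', [/\ inL x', vle x x', (forall v, pE x' v <= 0) & chiF x' <= chiF x].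
Proof.
elim: k => [|k IH] x xi yi xy hs;
  (case: (boolP [exists v, 0 < pE x v]) => [/existsP [v hv]|/existsPn h];
  last by exists x; split; [exact: xi | move=> u; exact: lexx | move=> u; rewrite leNgt h | exact: lexx]);
  have xv := up_step hy xy hv;
  (have xv1 : 1 <= y v - x v by apply: int_ge1; [apply: rpredB | rewrite subr_gt0]);
  have hsum : \sum_u (y u - (x u + Ev v u)) = \sum_u (y u - x u) - 1 by
    rewrite -(sum_Ev v) -sumrB; apply: eq_bigr => u _; ring.
- exfalso; have : 1 <= \sum_u (y u - x u).
    rewrite (bigD1 v) //=; rewrite -[1]addr0; apply: lerD => //.
    by apply: sumr_ge0 => u _; rewrite subr_ge0.
  lra.
- have H1 : inL (fun u => x u + Ev v u).
    by move=> u; apply: rpredD => //; rewrite /Ev; case: (u == v).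
  have H2 : vle (fun u => x u + Ev v u) y.
    move=> u; rewrite /Ev; case: (eqVneq u v) => [->|uv]; last by rewrite addr0.
    by move: (xv1); rewrite (_ : true%:R = 1 :> rat) //; lra.
  have H3 : \sum_u (y u - (x u + Ev v u)) <= k%:R.
    by rewrite hsum; move: hs; rewrite -natr1; lra.
  have [x' [x'i le' p' c']] := IH _ H1 yi H2 H3.
  exists x'; split => //.
    by move=> u; apply: le_trans (le' u); rewrite /Ev lerDl; case: (u == v).
  apply: le_trans c' _; rewrite chiF_addEv.
  have : 1 <= pE x v by apply: int_ge1 => //; exact: pE_int.
  lra.
Qed.


Lemma chiF_Zmin_le0 Z : is_Zmin adj e setT Z ->
  (forall l, inL l -> vpos l -> 0 <= chiF l) ->
  (exists l, [/\ inL l, vpos l & chiF l = 0]) -> chiF Z <= 0.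
Proof.
move=> hZ hge [l [li [lp [w lw]] l0]].
have Zf := Zmin_full hZ; case: (hZ) => [[Zi _ _ hZS] Zmin].
pose K := \sum_u l u.
have K0 : 0 <= K by apply: sumr_ge0 => u _; exact: lp.
have Kl : forall u, l u <= K.
  move=> u; rewrite /K (bigD1 u) //= lerDl; apply: sumr_ge0 => t _; exact: lp.
have Ki : K \is a Num.int by apply: rpred_sum => u _; exact: li.
pose y := fun u => K * Z u.
have hy : forall v, pE y v <= 0.
  by move=> v; rewrite /y pEZ; apply: mulr_ge0_le0 => //; apply: hZS; rewrite inE.
have yi : inL y by move=> u; apply: rpredM => //; exact: Zi.
have ly : vle l y.
  move=> u; apply: le_trans (Kl u) _; rewrite /y; have := Zf u; nra.
have S0 : 0 <= \sum_u (y u - l u) by apply: sumr_ge0 => u _; rewrite subr_ge0.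
have [x' [x'i lx' px' cx']] := laufer_up hy li yi ly (ltW (archi_boundP S0)).
have nz : exists v, x' v != 0.
  exists w; apply: lt0r_neq0; apply: lt_le_trans (lx' w).
  by rewrite lt_def lw lp.
have Zx : vle Z x' by apply: Zmin; split => //; exact: subsetT.
have := chi_split Zx.
have h1 : 0 <= chiF (fun v => x' v - Z v).
  case: (boolP [exists v, x' v - Z v != 0]) => [/existsP [v hv]|/existsPn h].
    apply: hge; first by move=> u; apply: rpredB.
    split; last by exists v.
    by move=> u; rewrite subr_ge0.
  rewrite (chiF_ext (x' := fun _ => 0)) ?chiF0 // => u.
  by apply/eqP; rewrite -[_ == _]negbK h.
have h2 : dform Z (fun v => x' v - Z v) <= 0.
  rewrite formC formE; apply: sumr_le0 => u _.
  apply: mulr_ge0_le0; first by rewrite subr_ge0.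
  by apply: hZS; rewrite inE.
lra.
Qed.


Lemma tri_int (x : rat) : x \is a Num.int -> x * (x - 1) / 2 \is a Num.int.
Proof.
have Hn : forall k : nat, (k%:R * (k%:R - 1) / 2 : rat) \is a Num.int.
  elim=> [|k IH]; first by rewrite !mul0r; exact: rpred0.
  have -> : ((k.+1)%:R * ((k.+1)%:R - 1) / 2 : rat) = k%:R * (k%:R - 1) / 2 + k%:R.
    by rewrite -natr1; field.
  by apply: rpredD => //; exact: rpred_nat.
move=> /intrP [[k|k] ->]; first exact: Hn.
rewrite NegzE mulrNz.
have -> : (- (k.+1%:~R) * (- (k.+1%:~R) - 1) / 2 : rat) =
  (k.+2)%:R * ((k.+2)%:R - 1) / 2.
  by rewrite -[(k.+2)%:R]natr1 -[(k.+1)%:R]natr1; field.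
exact: Hn.
Qed.

Lemma chiF_int x : inL x -> chiF x \is a Num.int.
Proof.
move=> xi.
pose f u v := if u == v then 0 else x u * x v * im u v.
pose r := @enum_rank T.
pose g u v := if (r u < r v)%N then f u v else 0.
have fsym : forall u v, f u v = f v u.
  by move=> u v; rewrite /f eq_sym imatC; case: eqP => // _; ring.
have fg : forall u v, f u v = g u v + g v u.
  move=> u v; rewrite /g; case: (eqVneq u v) => [->|uv].
    by rewrite ltnn /f eqxx addr0.
  have : r u != r v by apply: contra uv => /eqP /enum_rank_inj ->.
  rewrite neq_ltn => /orP [h|h].
    by rewrite h ltnNge (ltnW h) addr0.
  by rewrite h ltnNge (ltnW h) add0r fsym.
pose H := \sum_u \sum_v g u v.
have Hi : H \is a Num.int.
  apply: rpred_sum => u _; apply: rpred_sum => v _; rewrite /g /f.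
  case: ifP => _; last exact: rpred0.
  case: ifP => _; first exact: rpred0.
  by apply: rpredM; [apply: rpredM; exact: xi | exact: imat_int].
have hO : \sum_u \sum_v f u v = 2 * H.
  transitivity (\sum_u \sum_v g u v + \sum_u \sum_v g v u).
    rewrite -big_split; apply: eq_bigr => u _; rewrite -big_split.
    by apply: eq_bigr => v _; exact: fg.
  by rewrite [X in _ + X]exchange_big /H; ring.
have hF : dform x x = \sum_u x u * x u * (e u)%:~R + \sum_u \sum_v f u v.
  rewrite /Defs.form -big_split; apply: eq_bigr => u _ /=.
  rewrite (bigD1 u) //= /imat eqxx [X in _ = _ + X](bigD1 u) //= /f eqxx add0r.
  congr (_ + _); apply: eq_bigr => v /negbTE uv.
  by rewrite /imat (eq_sym u v) uv.
have -> : chiF x = \sum_u (- (e u)%:~R * (x u * (x u - 1) / 2) + x u) - H.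
  rewrite /chiF hF hO.
  have -> : \sum_u (- (e u)%:~R * (x u * (x u - 1) / 2) + x u) =
     (\sum_u x u * ((e u)%:~R + 2) - \sum_u x u * x u * (e u)%:~R) / 2.
    by rewrite -sumrB mulr_suml; apply: eq_bigr => u _; field.
  by field.
apply: rpredB => //; apply: rpred_sum => u _; apply: rpredD; last exact: xi.
apply: rpredM; first by rewrite rpredN; exact: intr_int.
by apply: tri_int; exact: xi.
Qed.

End Basics.

Section NewG.
Variables (T : finType) (adj : rel T) (e : T -> int) (s : nat) (v0 : T) (f : 'I_s -> int).
Local Notation T' := (T + 'I_s)%type.
Local Notation adj' := (@new_adj T adj s v0).
Local Notation e' := (new_dec e f).

Definition ext (a : T -> rat) : T' -> rat :=
  fun p => match p with inl v => a v | inr _ => 1 end.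

Lemma chiF_ext_new a :
  chiF adj' e' (ext a) = chiF adj e a + s%:R * (1 - a v0).
Proof.
rewrite /chiF /Defs.form !big_sumType /=.
have hi : forall u, \sum_(v : T') a u * ext a v * imat adj' e' (inl u) v =
   \sum_(v : T) a u * a v * imat adj' e' (inl u) (inl v) +
   \sum_(i < s) a u * 1 * imat adj' e' (inl u) (inr i).
  by move=> u; rewrite big_sumType.
have hj : forall i, \sum_(v : T') 1 * ext a v * imat adj' e' (inr i) v =
   \sum_(v : T) 1 * a v * imat adj' e' (inr i) (inl v) +
   \sum_(j < s) 1 * 1 * imat adj' e' (inr i) (inr j).
  by move=> i; rewrite big_sumType.
rewrite (eq_bigr _ (fun u _ => hi u)) (eq_bigr _ (fun i _ => hj i)).
rewrite !big_split /=.

have h1 : \sum_(u : T) \sum_(i < s) a u * 1 * imat adj' e' (inl u) (inr i)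
    = s%:R * a v0.
  rewrite (bigD1 v0) //= [X in _ + X]big1 ?addr0; last first.
    move=> u /negbTE uv; apply: big1 => i _; by rewrite /imat /= uv mulr0.
  have -> : \sum_(i < s) a v0 * 1 * imat adj' e' (inl v0) (inr i) = \sum_(i < s) a v0.
    by apply: eq_bigr => i _; rewrite /imat /= eqxx !mulr1.
  by rewrite sumr_const card_ord mulr_natl.
have h2 : \sum_(i < s) \sum_(v : T) 1 * a v * imat adj' e' (inr i) (inl v)
    = s%:R * a v0.
  rewrite exchange_big /= (bigD1 v0) //= [X in _ + X]big1 ?addr0; last first.
    move=> u /negbTE uv; apply: big1 => i _; by rewrite /imat /= uv mulr0.
  have -> : \sum_(i < s) 1 * a v0 * imat adj' e' (inr i) (inl v0) = \sum_(i < s) a v0.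
    by apply: eq_bigr => i _; rewrite /imat /= eqxx mulr1 mul1r.
  by rewrite sumr_const card_ord mulr_natl.
have h3 : \sum_(i < s) \sum_(j < s) 1 * 1 * imat adj' e' (inr i) (inr j)
    = \sum_(i < s) (f i)%:~R.
  apply: eq_bigr => i _; rewrite (bigD1 i) //= big1 ?addr0.
    by rewrite /imat /= eqxx !mul1r.
  move=> j ji; rewrite /imat /=.
  rewrite (_ : (inr i == inr j :> T') = false) ?mulr0 //.
  by apply/negbTE; apply: contra ji => /eqP [->].
have h4 : \sum_(u : T) \sum_(v : T) a u * a v * imat adj' e' (inl u) (inl v)
    = Pilot.Defs.form adj e a a.
  by apply: eq_bigr => u _; apply: eq_bigr => v _.
rewrite h1 h2 h3 h4.
have h5 : \sum_(i < s) 1 * ((f i)%:~R + 2) = \sum_(i < s) (f i)%:~R + s%:R * 2 :> rat.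
  transitivity (\sum_(i < s) ((f i)%:~R + 2 : rat)); first by apply: eq_bigr => i _; rewrite mul1r.
  by rewrite big_split /= sumr_const card_ord mulr_natl.
rewrite h5.
have h6 : \sum_(u : T) a u * ((new_dec e f (inl u))%:~R + 2) =
          \sum_(u : T) a u * ((e u)%:~R + 2) by [].
rewrite h6; by field.
Qed.

End NewG.

Section Loc.
Variables (T : finType) (adj : rel T) (e : T -> int).
Hypothesis adj_sym : symmetric adj.
Hypothesis adj_irr : irreflexive adj.
Local Notation im := (imat adj e).
Local Notation dform := (Pilot.Defs.form adj e).
Local Notation pE := (pairE adj e).
Variables (Y : T -> rat) (v0 : T).
Hypothesis hYv0 : Y v0 = 1.
Hypothesis hYE : forall u, Y u != 0 -> pE Y u = (e u)%:~R + 2.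

Definition loc (D : {set T}) := fun u => if u \in D then Y u else 0.

Lemma chiF_loc (D : {set T}) : v0 \notin D ->
  (forall a b, a \in D -> adj a b -> b != v0 -> b \in D) ->
  chiF adj e (loc D) = pE (loc D) v0 / 2.
Proof.
move=> v0D clD; set x := loc D.
have h1 : \sum_u x u * ((e u)%:~R + 2) = dform x Y.
  rewrite (formE _ adj_sym); apply: eq_bigr => u _; rewrite /x /loc.
  case: ifP => _; last by rewrite !mul0r.
  by case: (eqVneq (Y u) 0) => [->|/hYE ->]; rewrite ?mul0r.
have h2 : dform x (fun u => Y u - x u) = pE x v0.
  rewrite (formE _ adj_sym) /pairE; apply: eq_bigr => u _.
  rewrite (imatC _ adj_sym); rewrite /x /loc; case: ifP => uD; last by rewrite !mul0r.
  congr (_ * _); rewrite (bigD1 v0) //= (negbTE v0D) subr0 hYv0 mul1r.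
  rewrite big1 ?addr0 //= => w wv; case: ifP => wD; first by rewrite subrr mul0r.
  rewrite subr0 /imat; case: (eqVneq w u) => [E|wu]; first by move: wD; rewrite E uD.
  case: ifP => hw; last by rewrite mulr0.
  by move: wD; rewrite (clD u w uD _ wv) //; rewrite adj_sym.
rewrite /chiF h1; move: h2; rewrite (formBr _ adj_sym) => <-; by field.
Qed.

End Loc.

Unset Implicit Arguments.

Theorem mainTheorem13 (T : finType) (adj : rel T) (e : T -> int)
  (m : nat) (B : nat -> {set T}) (Z : nat -> T -> rat)
  (s : nat) (v0 : T) (f : 'I_s -> int) (Zmin : T -> rat) :
  decorated_tree adj e -> elliptic adj e ->
  NN_elliptic_seq adj e m B Z ->
  (1 <= s)%N ->
  decorated_tree (new_adj adj v0) (new_dec e f) ->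
  elliptic (new_adj adj v0) (new_dec e f) ->
  is_Zmin adj e setT Zmin ->
  [/\ v0 \in B 0%N :\: B 2%N,
      Zmin v0 = 1,
      pairE adj e Zmin v0 <= 1 - s%:R &
      (v0 \in B 1%N :\: B 2%N ->
         #|[set u in B 1%N | adj v0 u]| = 1%N)].
Proof.
move=> [[asym airr _ conn hE] negd] [_ [ZKe [isZe chige [l0 [l0i l0p l0c]]]]]
  [ZK [[isZ B0 [[_ Z0S] Z0cl _]] [hB hZ hne hsum]]] hs
  [[asym' _ _ _ _] _] [_ [ZK' [isZ' chige' _]]] hZm.
have chiG : forall l, inL l -> vpos l -> 0 <= chiF adj e l.
  by move=> l li lp; rewrite -(chiE asym _ isZe); apply: chige.
have chiZ : chiF adj e Zmin <= 0.
  apply: (chiF_Zmin_le0 asym airr negd conn hZm chiG).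
  by exists l0; split => //; rewrite -(chiE asym _ isZe).
have Zf := Zmin_full asym airr negd conn hZm.
have Zi : inL Zmin by case: hZm => [[]].
have nb : forall a, inL a -> (forall v, 0 <= a v) ->
    0 <= chiF adj e a + s%:R * (1 - a v0).
  move=> a ai ap; rewrite -(chiF_ext_new adj e v0 f) -(chiE asym' _ isZ'); apply: chige'.
    by case=> [v|i] /=; [exact: ai | exact: rpred1].
  split; first by case=> [v|i] /=; [exact: ap | exact: ler01].
  by exists (inr (Ordinal hs)); exact: oner_neq0.
have s1 : 1 <= s%:R :> rat by rewrite ler1n.
have Zv0 : Zmin v0 = 1.
  have := nb _ Zi (fun v => le_trans ler01 (Zf v)); have := Zf v0.
  move=> h1 h2; apply/eqP; rewrite eq_le h1 andbT.
  rewrite leNgt; apply/negP => h3.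
  have : s%:R * (1 - Zmin v0) < 0 by rewrite pmulr_rlt0; lra.
  lra.
have Evi : forall w : T, inL (Ev w) by move=> w v; rewrite /Ev; case: (v == w); [exact: rpred1 | exact: rpred0].
have pc : pairE adj e Zmin v0 <= 1 - s%:R.
  have := nb _ (fun v => rpredD (Zi v) (Evi v0 v))
    (fun v => addr_ge0 (le_trans ler01 (Zf v)) (ler0n _ _)).
  rewrite (chiF_addEv _ asym) /Ev eqxx Zv0.
  have -> : (1 + true%:R : rat) = 2 by [].
  lra.
have Zk0 : forall k, (1 <= k <= m.+1)%N -> forall v, 0 <= Z k v.
  move=> k hk; case: (hZ k hk) => [[_ sY _ hS] _]; exact: (S_nonneg asym negd sY hS).
have Zki : forall k, (1 <= k <= m.+1)%N -> inL (Z k).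
  by move=> k hk; case: (hZ k hk) => [[]].
pose Y := fun v => ZK v - Z 0%N v.
pose R := fun v => ZK v - (Z 0%N v + Z 1%N v).
have hY : forall v, Y v = \sum_(i < m.+1) Z i.+1 v.
  move=> v; rewrite /Y hsum big_ord_recl /=.
  by rewrite addrAC subrr add0r; apply: eq_bigr.
have hR : forall v, R v = \sum_(i < m) Z i.+2 v.
  move=> v; rewrite /R hsum big_ord_recl big_ord_recl /=.
  rewrite (_ : bump 0 0 = 1%N) //.
  have -> : \sum_(i < m) Z (bump 0 (bump 0 i)) v = \sum_(i < m) Z i.+2 v.
    by apply: eq_bigr.
  ring.
have Y0 : forall v, 0 <= Y v.
  move=> v; rewrite hY; apply: sumr_ge0 => i _; apply: Zk0.
  by move: (ltn_ord i); lia.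
have R0 : forall v, 0 <= R v.
  move=> v; rewrite hR; apply: sumr_ge0 => i _; apply: Zk0.
  by move: (ltn_ord i); lia.
have Z1i : inL (Z 1%N) by apply: Zki.
have Yi : inL Y by move=> v; rewrite /Y -opprB rpredN; exact: Z0cl.
have Ri : inL R.
  move=> v; rewrite /R opprD addrA; apply: rpredB; [exact: Yi | exact: Z1i].
have YZR : forall v, Y v = Z 1%N v + R v by move=> v; rewrite /Y /R; ring.
have B1E : forall v, (v \in B 1%N) = (Y v != 0).
  by move=> v; rewrite hB // inE big_ord1.
have B2E : forall v, (v \in B 2%N) = (R v != 0).
  by move=> v; rewrite hB // inE big_ord_recr big_ord1.
have chiYE : chiF adj e Y = (\sum_u Y u * pairE adj e (Z 0%N) u) / 2.
  rewrite /chiF.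
  have -> : \sum_u Y u * ((e u)%:~R + 2) = Defs.form adj e Y ZK.
    by rewrite (formE _ asym); apply: eq_bigr => u _; rewrite isZ.
  rewrite -(formBr _ asym) (formE _ asym); congr (_ / _).
  by rewrite /pairE; apply: eq_bigr => u _; congr (_ * _); apply: eq_bigr => w _; rewrite /Y opprB addrC subrK.
have chiY : chiF adj e Y <= 0.
  rewrite chiYE; apply: mulr_le0_ge0 => //; apply: sumr_le0 => u _.
  by apply: mulr_ge0_le0 => //; exact: Z0S.
have Yv0 : Y v0 <= 1.
  have := nb _ Yi Y0.
  move=> h; rewrite leNgt; apply/negP => h3.
  have : s%:R * (1 - Y v0) < 0 by rewrite pmulr_rlt0; lra.
  lra.
split => //.
- rewrite !inE B0 in_setT andbT B2E negbK; apply: contraT => Rv.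
  have R1 : 1 <= R v0 by apply: int_ge1 => //; rewrite lt_def Rv R0.
  have v0B1 : v0 \in B 1%N by rewrite B1E YZR; apply: lt0r_neq0; have := Zk0 1%N isT v0; lra.
  have := Zmin_sub_full asym airr negd conn hZm (hZ 1%N isT) v0B1.
  move: (YZR v0); lra.
move=> /setDP [v0B1 v0B2].
have Yv01 : Y v0 = 1.
  apply/eqP; rewrite eq_le Yv0 /=; apply: int_ge1 => //.
  by rewrite lt_def -B1E v0B1 Y0.
have chiY0 : chiF adj e Y = 0.
  apply/eqP; rewrite eq_le chiY /=; have := nb _ Yi Y0; rewrite Yv01 subrr mulr0 addr0.
  done.
have hZ0 : forall u, Y u != 0 -> pairE adj e (Z 0%N) u = 0.
  have hs0 : \sum_u - (Y u * pairE adj e (Z 0%N) u) = 0.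
    have S0 : \sum_u Y u * pairE adj e (Z 0%N) u = 0.
      by move: chiYE; rewrite chiY0; lra.
    by rewrite sumrN S0 oppr0.
  have hge : forall w, xpredT w -> 0 <= - (Y w * pairE adj e (Z 0%N) w).
    by move=> w _; rewrite oppr_ge0; apply: mulr_ge0_le0 => //; exact: Z0S.
  move=> u Yu.
  have := @psumr_eq0P _ _ xpredT (fun u => - (Y u * pairE adj e (Z 0%N) u)) hge hs0 u isT.
  by move=> /eqP; rewrite oppr_eq0 mulf_eq0 (negbTE Yu) /= => /eqP.
have hYE : forall u, Y u != 0 -> pairE adj e Y u = (e u)%:~R + 2.
  move=> u Yu; rewrite pEB isZ hZ0 // subr0 //.
have t0 : forall (D' : {set T}) u, v0 \notin D' ->
    0 <= loc Y D' u * imat adj e u v0.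
  move=> D' u vD; rewrite /loc; case: ifP => uD; last by rewrite mul0r.
  apply: mulr_ge0 => //; apply: imat_ge0; apply/eqP => E; move: uD vD.
  by rewrite E => ->.
have locI : forall D', inL (loc Y D').
  by move=> D' u; rewrite /loc; case: ifP => _; [exact: Yi | exact: rpred0].
pose X := loc Y [set~ v0].
have v0X : v0 \notin [set~ v0] by rewrite !inE eqxx.
have cX : chiF adj e X = pairE adj e X v0 / 2.
  apply: (chiF_loc asym Yv01 hYE v0X) => a b _ _ bv; by rewrite !inE.
have hYX : forall u, Y u = Ev v0 u + X u.
  move=> u; rewrite /X /loc /Ev !inE; case: (eqVneq u v0) => [->|uv] /=.
    by rewrite Yv01 addr0.
  by rewrite add0r.
have P2 : pairE adj e X v0 = 2.
  move: chiY0; rewrite (chiF_ext adj e hYX) (chiFD _ asym) (chiF_Ev _ asym).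
  rewrite (form_Evl _ asym) cX; lra.
have [u1 u1N] : exists u1, u1 \in [set u in B 1%N | adj v0 u].
  apply/set0Pn; apply/eqP => N0.
  have : pairE adj e X v0 = 0.
    apply: big1 => u _; rewrite /X /loc !inE.
    case: (eqVneq u v0) => [->|uv] /=; first by rewrite mul0r.
    case: (boolP (adj v0 u)) => a; last first.
      by rewrite /imat (negbTE uv) asym (negbTE a) mulr0.
    have : u \notin [set u in B 1%N | adj v0 u] by rewrite N0 inE.
    by rewrite inE a andbT B1E negbK => /eqP ->; rewrite mul0r.
  lra.
have -> : [set u in B 1%N | adj v0 u] = [set u1].
  apply/setP => u2; rewrite in_set1; apply/idP/eqP => [u2N|->] //.
  apply/eqP; apply: contraT => u21; exfalso.
  move: (u1N) (u2N); rewrite !inE !B1E => /andP [Y1 a1] /andP [Y2 a2].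
  have u12 : u1 != u2 by rewrite eq_sym.
  have [D [u1D u2D v0D clD]] := tree_split asym airr conn hE a1 a2 u12.
  pose XD := loc Y D.
  have cXD : chiF adj e XD = pairE adj e XD v0 / 2 := chiF_loc asym Yv01 hYE v0D clD.
  have Y1g : 1 <= Y u1 by apply: int_ge1 => //; rewrite lt_def Y1 Y0.
  have Y2g : 1 <= Y u2 by apply: int_ge1 => //; rewrite lt_def Y2 Y0.
  have u1v : u1 != v0 by apply/eqP => E; move: a1; rewrite E airr.
  have u2v : u2 != v0 by apply/eqP => E; move: a2; rewrite E airr.
  have low : Y u1 <= pairE adj e XD v0.
    rewrite /pairE (bigD1 u1) //= {1}/XD /loc u1D /imat (negbTE u1v) asym a1 mulr1.
    by rewrite lerDl; apply: sumr_ge0 => u _; exact: t0.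
  have up : Y u2 <= pairE adj e X v0 - pairE adj e XD v0.
    rewrite -pEB /pairE (bigD1 u2) //= /X /XD /loc !inE u2v (negbTE u2D) subr0.
    rewrite /imat (negbTE u2v) asym a2 mulr1 lerDl; apply: sumr_ge0 => u _.
    case: (eqVneq u v0) => [->|uv] /=; first by rewrite !inE eqxx (negbTE v0D) subrr mul0r.
    rewrite !inE uv /=; case: ifP => uD; first by rewrite subrr mul0r.
    by rewrite subr0; apply: mulr_ge0 => //; case: (adj u v0).
  have P1 : pairE adj e XD v0 = 1 by lra.
  have h := int_ge1 (chiF_int e asym (locI D)).
  move: h; rewrite -/XD cXD P1 => h.
  have : 1 <= (1 / 2 : rat) by apply: h; lra.
  lra.
by rewrite cards1.
Qed.
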